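(* Let $V$ be a finite set, $C=(C_R)_{R\subseteq V}$ non-negative capacities and $D=(D_S)_{S\subseteq V}$ non-negative demands. Then \[ \mathrm{MaxHSP}(V,C,D)=\min_{\delta\in\Delta(V)}\frac{C\cdot\delta}{D\cdot\delta}, \] where $\Delta(V)$ is the set of all diversities on $V$. Moreover, the minimum is attained by a diversity $\delta$ supported on the hypergraph $H=(V,E)$ with $E=\{e\subseteq V: C_e>0\}$.
   Context: A diversity on $V$ is a function $\delta$ from subsets of $V$ to $\mathbb{R}$ with $\delta(A)\ge 0$, $\delta(A)=0$ whenever $|A|\le 1$ (values $0$ on larger sets are allowed), and $\delta(A\cup B)+\delta(B\cup C)\ge\delta(A\cup C)$ whenever $B\neq\emptyset$. Write $C\cdot\delta=\sum_{R\subseteq V}C_R\delta(R)$ and $D\cdot\delta=\sum_{S\subseteq V}D_S\delta(S)$; the quotient is considered for $\delta$ with $D\cdot\delta>0$. All subsets $R\subseteq V$ are regarded as hyperedges with capacity $C_R$. For $S\subseteq V$, $\mathcal{T}_S$ is the set of minimal connected sub-hypergraphs (sets $t$ of hyperedges, connected, whose union contains $S$, minimal with this property). $\mathrm{MaxHSP}(V,C,D)$ is the optimal value of the LP: maximize $f$ subject to $\sum_{S}\sum_{t\in\mathcal{T}_S:R\in t}z_{t,S}\le C_R$ for all $R\subseteq V$, $\sum_{t\in\mathcal{T}_S}z_{t,S}=f\cdot D_S$ for all $S\subseteq V$, $z_{t,S}\ge0$. Given a hypergraph $H=(V,E)$ and non-negative weights $w$ on $E$, the hypergraph Steiner diversity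 is $\delta(A)=\min\{\sum_{e\in E'}w(e):E'\subseteq E \text{ induces a connected sub-hypergraph containing } A\}$; a diversity is supported on $H$ if it is the hypergraph Steiner diversity of $H$ for some non-negative weights on $E$.
   Formalization: Attainment of the minimum by a diversity supported on $H=(V,E)$ is claimed only when some diversity is supported on H, that is, when H is connected and its hyperedges cover V. The statement above fails without it. *)

(* Defs.v *)
From HB Require Import structures.
From mathcomp Require Import all_boot all_order all_algebra.
From mathcomp Require Import reals.
Set Implicit Arguments. Unset Strict Implicit. Unset Printing Implicit Defensive.
Import Order.TTheory GRing.Theory Num.Theory.
Local Open Scope ring_scope.

Section HSP.
Variables (V : finType) (R : realType).

Definition diversity (delta : {set V} -> R) : Prop :=
  [/\ (forall A, 0 <= delta A),
      (forall A : {set V}, (#|A| <= 1)%N -> delta A = 0) &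
      (forall A B C : {set V}, B != set0 ->
          delta (A :|: C) <= delta (A :|: B) + delta (B :|: C))].

Definition dotp (C delta : {set V} -> R) : R := \sum_(A : {set V}) C A * delta A.

Definition hadj (t : {set {set V}}) : rel {set V} :=
  fun e f => [&& e \in t, f \in t & ~~ [disjoint e & f]].

Definition hconnected (t : {set {set V}}) : bool :=
  [forall e1 in t, forall e2 in t, connect (hadj t) e1 e2].

(* t induces a connected sub-hypergraph containing S.  Convention: the empty
   set of hyperedges (the trivial sub-hypergraph on a single vertex) contains
   exactly the sets S with |S| <= 1. *)
Definition connects (t : {set {set V}}) (S : {set V}) : bool :=
  if t == set0 then (#|S| <= 1)%N
  else hconnected t && (S \subset \bigcup_(e in t) e).

Definition minimal_tree (S : {set V}) (t : {set {set V}}) : bool :=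
  connects t S && [forall t' : {set {set V}}, (t' \proper t) ==> ~~ connects t' S].

Definition HSP_feasible (C D : {set V} -> R) (f : R) : Prop :=
  exists z : {set {set V}} -> {set V} -> R,
  [/\ (forall t S, 0 <= z t S),
      (forall Re : {set V},
          \sum_(S : {set V}) \sum_(t : {set {set V}} | minimal_tree S t && (Re \in t)) z t S
            <= C Re) &
      (forall S : {set V}, \sum_(t : {set {set V}} | minimal_tree S t) z t S = f * D S)].

Definition is_MaxHSP (C D : {set V} -> R) (m : R) : Prop :=
  HSP_feasible C D m /\ (forall f, HSP_feasible C D f -> f <= m).

(* delta is the hypergraph Steiner diversity of the hypergraph (V,E)
   for some nonnegative weights w on E. *)
Definition supported_on (E : {set {set V}}) (delta : {set V} -> R) : Prop :=
  exists w : {set V} -> R,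
    (forall e, e \in E -> 0 <= w e) /\
    (forall A : {set V},
       (exists2 E' : {set {set V}}, (E' \subset E) && connects E' A &
                                   delta A = \sum_(e in E') w e) /\
       (forall E' : {set {set V}}, E' \subset E -> connects E' A ->
                                   delta A <= \sum_(e in E') w e)).

End HSP.

(* Main.v *)
Require Import Defs.
From HB Require Import structures.
From mathcomp Require Import all_boot all_order all_algebra.
From mathcomp Require Import reals.
From mathcomp Require Import ring lra.
Set Implicit Arguments. Unset Strict Implicit. Unset Printing Implicit Defensive.
Import Order.TTheory GRing.Theory Num.Theory.
Local Open Scope ring_scope.

Section Farkas.
Variable R : realFieldType.

Lemma sum_ind (J : finType) (j0 : J) (c : R) (F : J -> R) :
  \sum_j (if j == j0 then c else 0) * F j = c * F j0.
Proof.
rewrite (bigD1 j0) //= eqxx big1 ?addr0 // => j /negbTE ->; by rewrite mul0r.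
Qed.

Lemma sum_indr (J : finType) (j0 : J) (c : R) (F : J -> R) :
  \sum_j F j * (if j == j0 then c else 0) = F j0 * c.
Proof.
rewrite (bigD1 j0) //= eqxx big1 ?addr0 // => j /negbTE ->; by rewrite mulr0.
Qed.

Lemma sum_swap (I J : finType) (A : J -> I -> R) (u : J -> R) (v : I -> R) :
  \sum_j u j * (\sum_i A j i * v i) = \sum_i (\sum_j u j * A j i) * v i.
Proof.
under eq_bigr do rewrite mulr_sumr.
rewrite exchange_big /=; apply: eq_bigr => i _; rewrite mulr_suml.
by apply: eq_bigr => j _; rewrite mulrA.
Qed.

Definition lsol (I J : finType) (a : J -> I -> R) (b : J -> R) :=
  exists x : I -> R, forall j, \sum_i a j i * x i <= b j.
Definition lcert (I J : finType) (a : J -> I -> R) (b : J -> R) :=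
  exists l : J -> R, [/\ forall j, 0 <= l j, forall i, \sum_j l j * a j i = 0
                       & \sum_j l j * b j < 0].

Lemma between (T : finType) (P Q : pred T) (lo hi : T -> R) :
  (forall l u, P l -> Q u -> lo l <= hi u) ->
  exists v, (forall l, P l -> lo l <= v) /\ (forall u, Q u -> v <= hi u).
Proof.
move=> H; case: (pickP P) => [l0 Pl0|noP].
  case: (arg_maxP lo Pl0) => l Pl Hl; exists (lo l); split; first by [].
  by move=> u Qu; apply: H.
case: (pickP Q) => [u0 Qu0|noQ].
  case: (arg_minP hi Qu0) => u Qu Hu; exists (hi u); split; last by [].
  by move=> l; rewrite noP.
by exists 0; split=> x; rewrite ?noP ?noQ.
Qed.

Lemma farkas_base (I J : finType) (a : J -> I -> R) (b : J -> R) :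
  (forall j i, a j i = 0) -> lsol a b \/ lcert a b.
Proof.
move=> a0; case: (boolP [forall j, 0 <= b j]) => [/forallP Hb|].
  left; exists (fun _ => 0) => j; rewrite big1 // => i _; by rewrite mulr0.
rewrite negb_forall => /existsP [j0]; rewrite -ltNge => hj0.
right; exists (fun j => if j == j0 then 1 else 0); split.
- by move=> j; case: ifP.
- by move=> i; rewrite sum_ind a0 mulr0.
- by rewrite sum_ind mul1r.
Qed.

Section Step.
Variables (I J : finType) (a : J -> I -> R) (b : J -> R) (k : I).

Definition valid (p q : J) := (0 < a p k) && (a q k < 0).

Definition Mfm (j' : J + (J * J)) (j : J) : R :=
  match j' with
  | inl i0 => if a i0 k == 0 then (if j == i0 then 1 else 0) else 0
  | inr (p, q) => if valid p q then
       (if j == p then - a q k else 0) + (if j == q then a p k else 0) else 0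
  end.

Lemma Mfm_ge0 j' j : 0 <= Mfm j' j.
Proof.
case: j' => [i0|[p q]] /=; first by case: ifP => //; case: ifP.
case: ifP => // /andP [hp hq]; apply: addr_ge0; case: ifP => // _.
  by rewrite oppr_ge0 ltW. by rewrite ltW.
Qed.

Lemma sum_Mfm_inl i0 (F : J -> R) :
  \sum_j Mfm (inl i0) j * F j = if a i0 k == 0 then F i0 else 0.
Proof.
rewrite /=; case: ifP => _; first by rewrite sum_ind mul1r.
by rewrite big1 // => j _; rewrite mul0r.
Qed.

Lemma sum_Mfm_inr p q (F : J -> R) :
  \sum_j Mfm (inr (p, q)) j * F j =
  if valid p q then - a q k * F p + a p k * F q else 0.
Proof.
rewrite /=; case: ifP => _; last by rewrite big1 // => j _; rewrite mul0r.
by under eq_bigr do rewrite mulrDl; rewrite big_split /= !sum_ind.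
Qed.

Definition a' j' i := \sum_j Mfm j' j * a j i.
Definition b' j' := \sum_j Mfm j' j * b j.

Lemma a'k j' : a' j' k = 0.
Proof.
rewrite /a'; case: j' => [i0|[p q]]; first by rewrite sum_Mfm_inl; case: eqP.
rewrite sum_Mfm_inr; case: ifP => // _; ring.
Qed.

Lemma comb_sum (l' : J + (J * J) -> R) (F : J -> R) :
  \sum_j (\sum_j' l' j' * Mfm j' j) * F j =
  \sum_j' l' j' * \sum_j Mfm j' j * F j.
Proof. by rewrite sum_swap. Qed.

End Step.

Lemma farkas_aux n : forall (I : finType) (X : {set I}), (#|X| <= n)%N ->
  forall (J : finType) (a : J -> I -> R) (b : J -> R),
  (forall j i, i \notin X -> a j i = 0) -> lsol a b \/ lcert a b.
Proof.
elim: n => [|n IH] I X hX J a b hS.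
  apply: farkas_base => j i; apply: hS.
  by move: hX; rewrite leqn0 cards_eq0 => /eqP ->; rewrite in_set0.
case: (set_0Vmem X) => [X0|[k kX]].
  by apply: farkas_base => j i; apply: hS; rewrite X0 in_set0.
have hX' : (#|X :\ k| <= n)%N.
  by move: hX; rewrite (cardsD1 k X) kX add1n ltnS.
have hS' : forall j' i, i \notin X :\ k -> a' a k j' i = 0.
  move=> j' i; rewrite in_setD1 negb_and negbK => /orP [/eqP ->|iX].
    exact: a'k.
  by rewrite /a' big1 // => j _; rewrite hS // mulr0.
case: (IH I (X :\ k) hX' _ (a' a k) (b' a b k) hS') => [[x' hx']|[l' [l'0 l'a l'b]]].
- left.
  pose x0 := fun i => if i == k then 0 else x' i.
  pose r j := \sum_i a j i * x0 i.
  have Hc : forall j', \sum_j Mfm a k j' j * r j <= \sum_j Mfm a k j' j * b j.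
    move=> j'; apply: le_trans (hx' j'); rewrite sum_swap le_eqVlt; apply/orP; left.
    apply/eqP; apply: eq_bigr => i _; rewrite /x0; case: eqP => [->|//].
    by rewrite -/(a' a k j' k) a'k !mul0r.
  have Hb : forall l u, a l k < 0 -> 0 < a u k ->
      (r l - b l) / (- a l k) <= (b u - r u) / a u k.
    move=> l u hl hu.
    have := Hc (inr (u, l)); rewrite !sum_Mfm_inr /valid hl hu /= => h.
    rewrite ler_pdivlMr // mulrAC ler_pdivrMr ?oppr_gt0 //. nra.
  have [v [Hlo Hhi]] := between Hb.
  exists (fun i => if i == k then v else x' i) => j.
  have -> : \sum_i a j i * (if i == k then v else x' i) = r j + a j k * v.
    rewrite /r -sum_indr -big_split /=; apply: eq_bigr => i _.
    by rewrite /x0 -mulrDr; case: eqP => _; rewrite ?add0r ?addr0.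
  case: (ltgtP (a j k) 0) => hj.
  + have := Hlo j hj; rewrite ler_pdivrMr ?oppr_gt0 //; nra.
  + have := Hhi j hj; rewrite ler_pdivlMr //; nra.
  + have := Hc (inl j); rewrite !sum_Mfm_inl hj eqxx mul0r addr0 //.
- right; exists (fun j => \sum_j' l' j' * Mfm a k j' j); split.
  + by move=> j; apply: sumr_ge0 => j' _; apply: mulr_ge0 => //; apply: Mfm_ge0.
  + by move=> i; rewrite comb_sum; apply: l'a.
  + by rewrite comb_sum; apply: l'b.
Qed.

Lemma farkas (I J : finType) (a : J -> I -> R) (b : J -> R) :
  lsol a b \/ lcert a b.
Proof. by apply: (@farkas_aux #|[set: I]| I setT) => // j i; rewrite in_setT. Qed.


Lemma sum_unit (F : unit -> R) : \sum_(u : unit) F u = F tt.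
Proof. by rewrite (bigD1 tt) //= big1 ?addr0 // => -[]; rewrite eqxx. Qed.

Lemma farkas_nn (I J : finType) (a : J -> I -> R) (b : J -> R) :
  (exists x : I -> R, (forall i, 0 <= x i) /\ forall j, \sum_i a j i * x i <= b j) \/
  (exists l : J -> R, [/\ forall j, 0 <= l j, forall i, 0 <= \sum_j l j * a j i
                       & \sum_j l j * b j < 0]).
Proof.
pose a2 (j2 : J + I) (i : I) : R :=
  match j2 with inl j => a j i | inr i' => if i == i' then -1 else 0 end.
pose b2 (j2 : J + I) : R := match j2 with inl j => b j | inr _ => 0 end.
case: (farkas a2 b2) => [[x hx]|[l [l0 la lb]]].
- left; exists x; split.
  + by move=> i; have := hx (inr i); rewrite /= sum_ind => h; lra.
  + by move=> j; exact: hx (inl j).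
- right; exists (fun j => l (inl j)); split.
  + by move=> j; exact: l0.
  + move=> i; have := la i; rewrite big_sumType /=.
    under [X in _ + X]eq_bigr do rewrite eq_sym.
    rewrite sum_indr => h; have := l0 (inr i); lra.
  + by have := lb; rewrite big_sumType /= [X in _ + X]big1 ?addr0 // => i _; rewrite mulr0.
Qed.

Lemma lp_duality (I J : finType) (A : J -> I -> R) (b : J -> R) (c : I -> R) :
  (exists x, (forall i, 0 <= x i) /\ forall j, \sum_i A j i * x i <= b j) ->
  (exists y, (forall j, 0 <= y j) /\ forall i, c i <= \sum_j y j * A j i) ->
  exists x y, [/\ (forall i, 0 <= x i), (forall j, \sum_i A j i * x i <= b j),
     (forall j, 0 <= y j), (forall i, c i <= \sum_j y j * A j i) &
     \sum_j b j * y j <= \sum_i c i * x i].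
Proof.
move=> [x0 [x00 hx0]] [y0 [y00 hy0]].
pose a2 (k : J + (I + unit)) (v : I + J) : R :=
  match k, v with
  | inl j, inl i => A j i
  | inl j, inr _ => 0
  | inr (inl i), inl _ => 0
  | inr (inl i), inr j => - A j i
  | inr (inr _), inl i => - c i
  | inr (inr _), inr j => b j
  end.
pose b2 (k : J + (I + unit)) : R :=
  match k with inl j => b j | inr (inl i) => - c i | inr (inr _) => 0 end.
case: (farkas_nn a2 b2) => [[w [w0 hw]]|[l [l0 la lb]]].
- exists (fun i => w (inl i)), (fun j => w (inr j)); split.
  + by move=> i; apply: w0.
  + move=> j; have := hw (inl j); rewrite big_sumType /= [X in _ + X]big1 ?addr0 //.
    by move=> i _; rewrite mul0r.
  + by move=> j; apply: w0.
  + move=> i; have := hw (inr (inl i)); rewrite big_sumType /= big1 ?add0r; last first.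
      by move=> i' _; rewrite mul0r.
    move=> h; rewrite -lerN2; apply: le_trans h.
    rewrite -sumrN le_eqVlt; apply/orP; left; apply/eqP; apply: eq_bigr => j _.
    by rewrite mulNr mulrC.
  + have := hw (inr (inr tt)); rewrite big_sumType /=.
    under eq_bigr do rewrite mulNr; rewrite sumrN => h; lra.
- pose al j := l (inl j); pose be i := l (inr (inl i)); pose la0 := l (inr (inr tt)).
  have h1 : forall i, la0 * c i <= \sum_j al j * A j i.
    move=> i; have := la (inl i); rewrite big_sumType /= big_sumType /= sum_unit.
    rewrite [X in _ + (X + _)]big1 ?add0r; last by move=> i' _; rewrite mulr0.
    idtac.
    rewrite mulrN => h; rewrite /al /la0; lra.
  have h2 : forall j, \sum_i A j i * be i <= la0 * b j.
    move=> j; have := la (inr j); rewrite big_sumType /= big_sumType /= sum_unit.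
    rewrite big1 ?add0r; last by move=> i' _; rewrite mulr0.
    have -> : \sum_i l (inr (inl i)) * - A j i = - \sum_i A j i * be i.
      by rewrite -sumrN; apply: eq_bigr => i _; rewrite mulrN mulrC.
    rewrite /la0 => h; lra.
  have hb : \sum_j al j * b j - \sum_i c i * be i < 0.
    have := lb; rewrite big_sumType /= big_sumType /= sum_unit mulr0 addr0.
    have -> : \sum_i l (inr (inl i)) * - c i = - \sum_i c i * be i.
      by rewrite -sumrN; apply: eq_bigr => i _; rewrite mulrN mulrC.
    by [].
  have al0 : forall j, 0 <= al j by move=> j; apply: l0.
  have be0 : forall i, 0 <= be i by move=> i; apply: l0.
  have la00 : 0 <= la0 by apply: l0.
  have F1 : la0 * \sum_i c i * be i <= la0 * \sum_j al j * b j.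
    rewrite !mulr_sumr; apply: (@le_trans _ _ (\sum_j al j * (\sum_i A j i * be i))).
      rewrite sum_swap; apply: ler_sum => i _; rewrite mulrA.
      by apply: ler_wpM2r => //; apply: h1.
    apply: ler_sum => j _; rewrite mulrCA; apply: ler_wpM2l => //; apply: h2.
  case: (ltgtP la0 0) => hl.
  + by move: la00; rewrite leNgt hl.
  + have : \sum_i c i * be i <= \sum_j al j * b j by rewrite -(ler_pM2l hl).
    move=> h; lra.
  + have G1 : 0 <= \sum_j al j * b j.
      apply: (@le_trans _ _ (\sum_j al j * (\sum_i A j i * x0 i))); last first.
        by apply: ler_sum => j _; apply: ler_wpM2l => //; apply: hx0.
      rewrite sum_swap; apply: sumr_ge0 => i _; apply: mulr_ge0 => //.
      by have := h1 i; rewrite hl mul0r.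
    have G2 : \sum_i c i * be i <= 0.
      apply: (@le_trans _ _ (\sum_i (\sum_j y0 j * A j i) * be i)).
        by apply: ler_sum => i _; apply: ler_wpM2r => //; apply: hy0.
      rewrite -sum_swap; apply: sumr_le0 => j _; apply: mulr_ge0_le0 => //.
      by have := h2 j; rewrite hl mul0r.
    lra.
Qed.

End Farkas.

Section Hyp.
Variables (V : finType) (R : realType).
Implicit Types (delta : {set V} -> R) (t : {set {set V}}) (S A B : {set V}).

Lemma set1_neq0 (T : finType) (x : T) : [set x] != set0.
Proof. by apply/set0Pn; exists x; rewrite set11. Qed.

Lemma div_ge0 delta A : diversity delta -> 0 <= delta A.
Proof. by case. Qed.

Lemma div_small delta A : diversity delta -> (#|A| <= 1)%N -> delta A = 0.
Proof. by case=> _ h _; apply: h. Qed.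

Lemma div_tri delta A B C : diversity delta -> B != set0 ->
  delta (A :|: C) <= delta (A :|: B) + delta (B :|: C).
Proof. by case=> _ _ h; apply: h. Qed.

Lemma div_mono delta A B : diversity delta -> A \subset B -> delta A <= delta B.
Proof.
move=> hd sAB.
have step : forall S x, delta S <= delta (S :|: [set x]).
  move=> S x; have := div_tri S set0 hd (set1_neq0 x).
  by rewrite !setU0 (div_small hd (eq_leq (cards1 x))) addr0.
suff H : forall n S, (#|S| <= n)%N -> delta A <= delta (A :|: S).
  by have := H _ B (leqnn _); rewrite (setUidPr sAB).
elim=> [|n IH] S hS.
  by move: hS; rewrite leqn0 cards_eq0 => /eqP ->; rewrite setU0.
case: (set_0Vmem S) => [->|[x xS]]; first by rewrite setU0.
have hS' : (#|S :\ x| <= n)%N by move: hS; rewrite (cardsD1 x S) xS add1n ltnS.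
apply: le_trans (IH _ hS') _; apply: le_trans (step _ x) _.
rewrite le_eqVlt; apply/orP; left; apply/eqP; congr delta.
by apply/setP => y; rewrite !inE; case: (boolP (y == x)) => [/eqP ->|_]; rewrite ?xS ?orbT /= ?orbF.
Qed.

Lemma div_union delta A B : diversity delta -> A :&: B != set0 ->
  delta (A :|: B) <= delta A + delta B.
Proof.
move=> hd hAB; have := div_tri A B hd hAB.
have -> : A :|: A :&: B = A by apply/setP => x; rewrite !inE; case: (x \in A).
have -> // : A :&: B :|: B = B by apply/setP => x; rewrite !inE; case: (x \in A); case: (x \in B).
Qed.

Lemma path_exit (T : eqType) (r : rel T) (P : pred T) x p :
  P x -> path r x p -> ~~ P (last x p) -> exists a b, [&& P a, ~~ P b & r a b].
Proof.
elim: p x => [|y p IH] x /= Px; first by rewrite Px.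
case/andP => rxy hp hl; case: (boolP (P y)) => Py.
  exact: IH Py hp hl.
by exists x, y; rewrite Px Py rxy.
Qed.

Lemma subadd delta t S : diversity delta -> connects t S ->
  delta S <= \sum_(e in t) delta e.
Proof.
move=> hd; rewrite /connects; case: ifP => [_ hS|/negbT t0 /andP [hc sS]].
  by rewrite (div_small hd hS); apply: sumr_ge0 => e _; apply: div_ge0.
apply: le_trans (div_mono hd sS) _.
case: (set_0Vmem t) => [t0'|[e1 e1t]]; first by rewrite t0' eqxx in t0.
pose good (s : {set {set V}}) := [&& s \subset t, e1 \in s &
   delta (\bigcup_(e in s) e) <= \sum_(e in s) delta e].
have g1 : good [set e1].
  by rewrite /good sub1set e1t set11 big_set1 big_set1 lexx.
case: (@arg_maxnP _ [set e1] good (fun s => #|s|) g1) => s /and3P [sst e1s hs] smax.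
suff -> : t = s by [].
apply/eqP; rewrite eqEsubset sst andbT; apply/subsetP => g gt.
apply/negPn/negP => gs.
have : connect (hadj t) e1 g by move/forallP: hc => /(_ e1); rewrite e1t /= => /forallP /(_ g); rewrite gt.
case/connectP => p hp hg.
have [a [b /and3P [as_ bs hab]]] : exists a b, [&& a \in s, b \notin s & hadj t a b].
  by apply: (path_exit (P := fun x => x \in s)) e1s hp _; rewrite -hg.
move: (hab); rewrite /hadj => /and3P [at_ bt dab].
have gs' : good (b |: s).
  rewrite /good subUset sub1set bt sst in_setU1 e1s orbT /=.
  rewrite big_setU1 //= big_setU1 //=.
  apply: le_trans (div_union hd _) _.
    apply: contraNneq dab => h; rewrite -setI_eq0; apply/eqP/setP => x.
    rewrite !inE; apply/negP => /andP [xa xb].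
    have : x \in b :&: \bigcup_(e in s) e by rewrite inE xb; apply/bigcupP; exists a.
    by rewrite h inE.
  by rewrite lerD2l.
by have := smax _ gs'; rewrite cardsU1 bs /= add1n ltnn.
Qed.

Lemma min_sub t S : connects t S ->
  exists2 t1 : {set {set V}}, t1 \subset t & minimal_tree S t1.
Proof.
move=> ht.
pose P (t' : {set {set V}}) := (t' \subset t) && connects t' S.
have Pt : P t by rewrite /P subxx ht.
case: (@arg_minnP _ t P (fun s => #|s|) Pt) => t1 /andP [s1 c1] m1.
exists t1 => //; rewrite /minimal_tree c1 /=; apply/forallP => t'.
apply/implyP => pt'; apply/negP => ct'.
have : P t' by rewrite /P ct' andbT; apply: subset_trans s1; exact: proper_sub pt'.
move/m1; rewrite leqNgt; by rewrite proper_card.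
Qed.

Lemma hadj_sym t : symmetric (hadj t).
Proof. by move=> e f; rewrite /hadj andbCA disjoint_sym. Qed.

Lemma connect_hadj_sub t1 t2 e f : t1 \subset t2 ->
  connect (hadj t1) e f -> connect (hadj t2) e f.
Proof.
move=> s12; apply: connect_sub => x y /and3P [xt yt dxy]; apply: connect1.
by rewrite /hadj (subsetP s12 _ xt) (subsetP s12 _ yt).
Qed.

Lemma sub_bigcup (t : {set {set V}}) A x : x \in A -> A \in t -> x \in \bigcup_(e in t) e.
Proof. by move=> xA At; apply/bigcupP; exists A. Qed.

Lemma connects_union t1 t2 A B C : B != set0 -> connects t1 (A :|: B) ->
  connects t2 (B :|: C) -> connects (t1 :|: t2) (A :|: C).
Proof.
move=> /set0Pn [b bB]; rewrite /connects.
have cardsub : forall X Y : {set V}, (#|X :|: Y| <= 1)%N -> b \in Y -> X \subset Y.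
  move=> X Y h bY; have := subsetUr X Y; move=> sYU.
  have : Y == X :|: Y.
    rewrite eqEcard sYU /=; apply: leq_trans h _; rewrite card_gt0; apply/set0Pn; by exists b.
  by move/eqP => ->; apply: subsetUl.
case: ifP => [/eqP t10 h1|t10 /andP [hc1 s1]]; case: ifP => [/eqP t20 h2|t20 /andP [hc2 s2]].
- rewrite t10 t20 setU0 eqxx; apply: leq_trans (subset_leq_card _) h2.
  by rewrite setSU // (cardsub _ _ h1 bB).
- rewrite t10 set0U t20 hc2 /=; apply: subset_trans s2; rewrite setSU //.
  exact: cardsub _ _ h1 bB.
- rewrite t20 setU0 t10 hc1 /=; apply: subset_trans s1; rewrite setUS //.
  by rewrite setUC in h2; exact: cardsub _ _ h2 bB.
- have -> : (t1 :|: t2 == set0) = false by rewrite setU_eq0 t10.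
  apply/andP; split; last first.
    rewrite subUset; apply/andP; split; apply/subsetP => x xU.
      have := subsetP s1 x; rewrite inE xU => /(_ isT) /bigcupP [e et xe].
      by apply: (sub_bigcup xe); rewrite inE et.
    have := subsetP s2 x; rewrite inE xU orbT => /(_ isT) /bigcupP [e et xe].
    by apply: (sub_bigcup xe); rewrite inE et orbT.
  have := subsetP s1 b; rewrite inE bB orbT => /(_ isT) /bigcupP [e1 e1t be1].
  have := subsetP s2 b; rewrite inE bB => /(_ isT) /bigcupP [e2 e2t be2].
  have sym := sym_connect_sym (hadj_sym (t1 :|: t2)).
  have toe1 : forall e, e \in t1 :|: t2 -> connect (hadj (t1 :|: t2)) e e1.
    move=> e; rewrite inE => /orP [et|et].
      apply: (connect_hadj_sub (subsetUl t1 t2)).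
      by move/forallP: hc1 => /(_ e); rewrite et /= => /forallP /(_ e1); rewrite e1t.
    apply: (@connect_trans _ _ e2).
      apply: (connect_hadj_sub (subsetUr t1 t2)).
      by move/forallP: hc2 => /(_ e); rewrite et /= => /forallP /(_ e2); rewrite e2t.
    apply: connect1; rewrite /hadj !inE e1t e2t orbT /= -setI_eq0.
    by apply/set0Pn; exists b; rewrite inE be1 be2.
  apply/forallP => e; apply/implyP => eU; apply/forallP => f; apply/implyP => fU.
  by apply: (connect_trans (toe1 _ eU)); rewrite sym; apply: toe1.
Qed.
End Hyp.

Section Steiner.
Variables (V : finType) (R : realType) (E : {set {set V}}) (w : {set V} -> R).
Implicit Types (t : {set {set V}}) (S A B : {set V}).
Hypothesis hw : forall e, e \in E -> 0 <= w e.
Hypothesis hcov : forall S : {set V}, exists t : {set {set V}}, (t \subset E) && connects t S.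

Definition cost (t : {set {set V}}) := \sum_(e in t) w e.
Definition steiner (S : {set V}) : R :=
  cost (Order.arg_min (xchoose (hcov S)) (fun t => (t \subset E) && connects t S) cost).

Lemma steiner_spec S : exists2 t : {set {set V}}, (t \subset E) && connects t S &
  steiner S = cost t /\ (forall t' : {set {set V}}, t' \subset E -> connects t' S -> steiner S <= cost t').
Proof.
rewrite /steiner; case: (arg_minP cost (xchooseP (hcov S))) => t Pt Ht.
exists t; first exact: Pt.
split; first by []. by move=> t' s' c'; apply: Ht; rewrite /= s' c'.
Qed.

Lemma cost_ge0 t : t \subset E -> 0 <= cost t.
Proof. by move=> sE; apply: sumr_ge0 => e et; apply: hw; apply: (subsetP sE). Qed.

Lemma cost_sub t1 t : t1 \subset t -> t \subset E -> cost t1 <= cost t.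
Proof.
move=> s1 sE; rewrite /cost (big_setID t1 (A := t)) /= (setIidPr s1) lerDl.
apply: sumr_ge0 => e; rewrite inE => /andP [_ et]; apply: hw; exact: (subsetP sE).
Qed.

Lemma cost_union t1 t2 : t1 \subset E -> t2 \subset E ->
  cost (t1 :|: t2) <= cost t1 + cost t2.
Proof.
move=> s1 s2; rewrite /cost (big_setID t1 (A := t1 :|: t2)) /= setUK setDUl setDv set0U.
rewrite lerD2l (big_setID t1 (A := t2)) /= lerDr.
apply: sumr_ge0 => e; rewrite inE => /andP [et _]; apply: hw; exact: (subsetP s2).
Qed.

Lemma steiner_div : diversity steiner.
Proof.
split.
- move=> A; case: (steiner_spec A) => t /andP [sE _] [-> _]; exact: cost_ge0.
- move=> A hA; apply/eqP; rewrite eq_le; apply/andP; split.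
    case: (steiner_spec A) => t _ [_ H]; have := H set0 (sub0set _).
    by rewrite /connects eqxx hA /cost big_set0 => /(_ isT).
  case: (steiner_spec A) => t /andP [sE _] [-> _]; exact: cost_ge0.
- move=> A B C hB.
  case: (steiner_spec (A :|: B)) => t1 /andP [s1 c1] [-> _].
  case: (steiner_spec (B :|: C)) => t2 /andP [s2 c2] [-> _].
  case: (steiner_spec (A :|: C)) => t _ [_ H].
  apply: le_trans (cost_union s1 s2).
  apply: H; first by rewrite subUset s1 s2.
  exact: connects_union hB c1 c2.
Qed.

Lemma steiner_supp : supported_on E steiner.
Proof.
exists w; split => // A; case: (steiner_spec A) => t Pt [H1 H2]; split.
  by exists t.
exact: H2.
Qed.

Lemma connects_set1 (e : {set V}) : connects [set e] e.
Proof.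
rewrite /connects (negbTE (set1_neq0 e)); apply/andP; split.
  apply/forallP => e1; apply/implyP => /set1P ->; apply/forallP => e2.
  by apply/implyP => /set1P ->; apply: connect0.
by rewrite big_set1.
Qed.

Lemma steiner_le_w e : e \in E -> steiner e <= w e.
Proof.
move=> eE; case: (steiner_spec e) => _ _ [_ H].
by have := H [set e]; rewrite sub1set eE /cost big_set1; apply => //; apply: connects_set1.
Qed.

Lemma steiner_ge delta : diversity delta -> (forall e, e \in E -> delta e <= w e) ->
  forall S, delta S <= steiner S.
Proof.
move=> hd hle S; case: (steiner_spec S) => t /andP [sE ct] [-> _].
apply: le_trans (subadd hd ct) _; apply: ler_sum => e et; apply: hle.
exact: (subsetP sE).
Qed.

End Steiner.

Section Weak.
Variables (V : finType) (R : realType).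
Implicit Types (t : {set {set V}}) (S A B e : {set V}).

Lemma weak_dual (C D : {set V} -> R) f delta : diversity delta ->
  HSP_feasible C D f -> f * dotp D delta <= dotp C delta.
Proof.
move=> hd [z [z0 zcap zdem]]; rewrite /dotp mulr_sumr.
have E1 : \sum_S f * (D S * delta S) = \sum_S (\sum_(t | minimal_tree S t) z t S) * delta S.
  by apply: eq_bigr => S _; rewrite zdem mulrA.
rewrite E1; apply: (@le_trans _ _ (\sum_S \sum_(t | minimal_tree S t) z t S * \sum_(e in t) delta e)).
  apply: ler_sum => S _; rewrite mulr_suml; apply: ler_sum => t mt.
  apply: ler_wpM2l => //; apply: subadd hd _.
  by move/andP: mt => [].
have L : forall S, \sum_(t | minimal_tree S t) z t S * \sum_(e in t) delta e =
   \sum_t \sum_e (if minimal_tree S t && (e \in t) then z t S * delta e else 0).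
  move=> S; rewrite big_mkcond; apply: eq_bigr => t _; rewrite mulr_sumr big_mkcond /=.
  case: (minimal_tree S t) => /=; first by apply: eq_bigr => e _; case: (e \in t) => //; rewrite mulr0.
  by rewrite big1.
under eq_bigr do rewrite L.
under eq_bigr do rewrite exchange_big /=; rewrite exchange_big /=.
apply: ler_sum => e _.
have -> : \sum_S \sum_t (if minimal_tree S t && (e \in t) then z t S * delta e else 0)
   = delta e * \sum_S \sum_(t | minimal_tree S t && (e \in t)) z t S.
  rewrite mulr_sumr; apply: eq_bigr => S _; rewrite mulr_sumr [in RHS]big_mkcond /=.
  by apply: eq_bigr => t _; case: ifP => _; rewrite ?mulr0 // mulrC.
by rewrite mulrC; apply: ler_wpM2r; [exact: div_ge0 | exact: zcap].
Qed.
End Weak.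

Section Helpers.
Variable R : realType.

Lemma sum_pair (T1 T2 : finType) (F : T1 * T2 -> R) :
  \sum_p F p = \sum_a \sum_b F (a, b).
Proof. by rewrite pair_big; apply: eq_bigr => -[a b]. Qed.

Lemma sum_sel (T1 T2 : finType) (s0 : T1) (P : T1 -> T2 -> bool)
    (F : T1 -> T2 -> R) (c : R) :
  \sum_s \sum_t (if (s == s0) && P s t then c else 0) * F s t =
  c * \sum_(t | P s0 t) F s0 t.
Proof.
rewrite (bigD1 s0) //= [X in _ + X]big1 ?addr0; last first.
  by move=> s /negbTE hs; apply: big1 => t _; rewrite hs mul0r.
rewrite mulr_sumr [in RHS]big_mkcond; apply: eq_bigr => t _; rewrite eqxx /=.
by case: (P s0 t); rewrite ?mul0r ?mulr0 // mul1r.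
Qed.

Lemma sum_selr (T : finType) (s : T) (b : bool) (F : T -> R) (c : R) :
  \sum_j F j * (if (s == j) && b then c else 0) = if b then F s * c else 0.
Proof.
case: b; last by rewrite big1 // => j _; rewrite andbF mulr0.
by under eq_bigr do rewrite andbT eq_sym; rewrite sum_indr.
Qed.

Lemma connects_sub1 (V : finType) (e S : {set V}) : S \subset e -> connects [set e] S.
Proof.
move=> sS; rewrite /connects (negbTE (set1_neq0 e)); apply/andP; split.
  apply/forallP => e1; apply/implyP => /set1P ->; apply/forallP => e2.
  by apply/implyP => /set1P ->; apply: connect0.
by rewrite big_set1.
Qed.

End Helpers.

Theorem proposition16 (V : finType) (R : realType) (C D : {set V} -> R)
    (hC : forall A, 0 <= C A) (hD : forall S, 0 <= D S)
    (hex : exists delta, diversity delta /\ 0 < dotp D delta) :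
  exists m : R,
    [/\ is_MaxHSP C D m,
        (forall delta, diversity delta -> 0 < dotp D delta ->
           m <= dotp C delta / dotp D delta),
        (exists delta, [/\ diversity delta, 0 < dotp D delta &
                           dotp C delta / dotp D delta = m]) &
        ((exists delta : {set V} -> R, supported_on [set e | 0 < C e] delta) ->
         exists delta, [/\ diversity delta, supported_on [set e | 0 < C e] delta,
                           0 < dotp D delta & dotp C delta / dotp D delta = m])].
Proof.
case: hex => d0 [hd0 hD0].
pose I := (unit + ({set V} * {set {set V}}))%type.
pose J := ({set V} + ({set V} + {set V}))%type.
pose A (j : J) (i : I) : R := match j, i with
 | inl Re, inl _ => 0
 | inl Re, inr (s, t) => if minimal_tree s t && (Re \in t) then 1 else 0
 | inr (inl S0), inl _ => - D S0
 | inr (inl S0), inr (s, t) => if (s == S0) && minimal_tree s t then 1 else 0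
 | inr (inr S0), inl _ => D S0
 | inr (inr S0), inr (s, t) => if (s == S0) && minimal_tree s t then -1 else 0
 end.
pose b (j : J) : R := match j with inl Re => C Re | inr _ => 0 end.
pose c (i : I) : R := match i with inl _ => 1 | inr _ => 0 end.
have Ea : forall (x : I -> R) Re, \sum_i A (inl Re) i * x i =
    \sum_S \sum_(t | minimal_tree S t && (Re \in t)) x (inr (S, t)).
  move=> x Re; rewrite big_sumType /= big1 ?add0r; last by move=> u _; rewrite mul0r.
  rewrite sum_pair; apply: eq_bigr => S _; rewrite [in RHS]big_mkcond.
  by apply: eq_bigr => t _; case: ifP; rewrite ?mul1r ?mul0r.
have Eb : forall (x : I -> R) S0, \sum_i A (inr (inl S0)) i * x i =
    - D S0 * x (inl tt) + \sum_(t | minimal_tree S0 t) x (inr (S0, t)).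
  move=> x S0; rewrite big_sumType /= sum_unit sum_pair.
  by rewrite (sum_sel S0 (fun S t => minimal_tree S t) (fun S t => x (inr (S, t)))) mul1r.
have Ec : forall (x : I -> R) S0, \sum_i A (inr (inr S0)) i * x i =
    D S0 * x (inl tt) - \sum_(t | minimal_tree S0 t) x (inr (S0, t)).
  move=> x S0; rewrite big_sumType /= sum_unit sum_pair.
  by rewrite (sum_sel S0 (fun S t => minimal_tree S t) (fun S t => x (inr (S, t)))) mulN1r.
have Ed : forall (y : J -> R), \sum_j y j * A j (inl tt) =
    \sum_S D S * (y (inr (inr S)) - y (inr (inl S))).
  move=> y; rewrite big_sumType /= big1 ?add0r; last by move=> Re _; rewrite mulr0.
  rewrite big_sumType /= -big_split /=; apply: eq_bigr => S _; ring.
have Ee : forall (y : J -> R) S t, \sum_j y j * A j (inr (S, t)) =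
    if minimal_tree S t then
      \sum_(Re in t) y (inl Re) + y (inr (inl S)) - y (inr (inr S)) else 0.
  move=> y S t; rewrite big_sumType /= big_sumType /= !sum_selr.
  case: (minimal_tree S t) => /=; last by rewrite big1 ?add0r ?addr0 // => Re _; rewrite mulr0.
  rewrite mulr1 mulrN1 addrA; congr (_ + _ - _); rewrite [in RHS]big_mkcond.
  by apply: eq_bigr => Re _; case: (Re \in t); rewrite ?mulr1 ?mulr0.
have Kpos := hD0.
pose K := dotp D d0.
have primal : exists x : I -> R, (forall i, 0 <= x i) /\ forall j, \sum_i A j i * x i <= b j.
  exists (fun _ => 0); split => // j; rewrite big1 ?mulr0 //; last by move=> i _; rewrite mulr0.
  by case: j => [Re|[S0|S0]] //=.
have dual : exists y : J -> R, (forall j, 0 <= y j) /\ forall i, c i <= \sum_j y j * A j i.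
  exists (fun j => match j with inl Re => d0 Re / K | inr (inl _) => 0 | inr (inr S1) => d0 S1 / K end).
  split.
    by case=> [Re|[S0|S0]] //; apply: divr_ge0 (div_ge0 _ hd0) (ltW Kpos).
  case=> [[]|[S1 t]].
    rewrite Ed /= /K; under eq_bigr do rewrite subr0 mulrA.
    by rewrite -mulr_suml /dotp divff // gt_eqF.
  rewrite Ee /=; case: ifP => // mt; rewrite addr0 subr_ge0 -mulr_suml.
  apply: ler_wpM2r; first by rewrite invr_ge0 ltW.
  by apply: subadd hd0 _; move/andP: mt => [].
have [x [y [x0 hx y0 hy hxy]]] := lp_duality primal dual.
pose f := x (inl tt).
pose z t S := x (inr (S, t)).
have feas : HSP_feasible C D f.
  exists z; split.
  - by move=> t S; apply: x0.
  - by move=> Re; have := hx (inl Re); rewrite Ea.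
  - move=> S; apply/eqP; rewrite eq_le; apply/andP; split.
      by have := hx (inr (inl S)); rewrite Eb /= => h; rewrite /z /f; lra.
    by have := hx (inr (inr S)); rewrite Ec /= => h; rewrite /z /f; lra.
have hxy' : \sum_Re C Re * y (inl Re) <= f.
  move: hxy; rewrite !big_sumType /= sum_unit mul1r [X in _ <= _ + X]big1 ?addr0; last by move=> p _; rewrite mul0r.
  idtac.
  have Z1 : forall F : {set V} -> R, \sum_i 0 * F i = 0 by move=> F; rewrite big1 // => i _; rewrite mul0r.
  by rewrite !Z1 !addr0.
pose w Re := y (inl Re).
have hw : forall e, e \in [set: {set V}] -> 0 <= w e by move=> e _; apply: y0.
have hcov : forall S : {set V}, exists t : {set {set V}}, (t \subset [set: {set V}]) && connects t S.
  by move=> S; exists [set setT]; rewrite subsetT /=; apply: connects_sub1; apply: subsetT.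
pose ds := steiner w hcov.
have hds : diversity ds by apply: (steiner_div hw hcov).
have dsD : 1 <= dotp D ds.
  have := hy (inl tt); rewrite Ed /= /dotp => h; apply: le_trans h _.
  apply: ler_sum => S _; apply: ler_wpM2l => //.
  case: (steiner_spec w hcov S) => t /andP [_ ct] [hS _]; rewrite /ds hS.
  case: (min_sub ct) => t1 s1 m1; apply: le_trans _ (cost_sub hw s1 (subsetT _)).
  have := hy (inr (S, t1)); rewrite Ee /= m1 => h; rewrite /cost /w; lra.
have dsC : dotp C ds <= f.
  apply: le_trans hxy'; apply: ler_sum => Re _; apply: ler_wpM2l => //.
  by apply: (steiner_le_w w hcov); rewrite inE.
have DsPos : 0 < dotp D ds by apply: lt_le_trans dsD; exact: ltr01.
have Cs0 : 0 <= dotp C ds by apply: sumr_ge0 => e _; apply: mulr_ge0 => //; apply: div_ge0.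
have weak : forall g delta, diversity delta -> 0 < dotp D delta -> HSP_feasible C D g ->
    g <= dotp C delta / dotp D delta.
  by move=> g delta hd hp hf; rewrite ler_pdivlMr //; apply: weak_dual hd hf.
have fratio : dotp C ds / dotp D ds = f.
  apply/eqP; rewrite eq_le; apply/andP; split; last exact: weak.
  rewrite ler_pdivrMr //; apply: (le_trans dsC).
  rewrite -{1}(mulr1 f); apply: ler_wpM2l => //; exact: le_trans Cs0 dsC.
exists f; split.
- by split => // g hg; rewrite -fratio; apply: weak.
- by move=> delta hd hp; apply: weak.
- by exists ds.
move=> [ds0 [w0 [hw0 hsup]]].
pose E4 := [set e | 0 < C e].
have hw4 : forall e, e \in E4 -> 0 <= ds e by move=> e _; apply: div_ge0.
have hcov4 : forall S : {set V}, exists t : {set {set V}}, (t \subset E4) && connects t S.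
  by move=> S; case: (hsup S) => [[t ht _] _]; exists t.
pose d4 := steiner ds hcov4.
have hd4 : diversity d4 by apply: (steiner_div hw4 hcov4).
have ge4 : forall S, ds S <= d4 S by apply: (steiner_ge hcov4 hds) => e _.
have D4 : dotp D ds <= dotp D d4 by apply: ler_sum => S _; apply: ler_wpM2l.
have C4 : dotp C d4 <= dotp C ds.
  apply: ler_sum => e _; have := hC e; rewrite le_eqVlt => /orP [/eqP <-|he].
    by rewrite !mul0r.
  by apply: ler_wpM2l => //; apply: (steiner_le_w ds hcov4); rewrite inE.
have D4pos : 0 < dotp D d4 by apply: lt_le_trans D4.
have f0 : 0 <= f by rewrite -fratio; apply: divr_ge0 => //; apply: ltW.
have fD : f * dotp D ds = dotp C ds by rewrite -fratio divfK // gt_eqF.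
exists d4; split => //; first exact: (steiner_supp hw4 hcov4).
apply/eqP; rewrite eq_le; apply/andP; split; last first.
  by apply: weak => //.
rewrite ler_pdivrMr //; apply: le_trans C4 _; rewrite -fD; nra.
Qed.
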